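(* Let $G$ be a residually finite group and let $A$ be a finite set. Suppose that $X \subset A^G$ is a strongly irreducible subshift of finite type and that there exists a periodic configuration in $X$. Then the set of periodic configurations of $X$ is dense in $X$.
   Context: $A^G=\{x\colon G\to A\}$ carries the prodiscrete topology (product of discrete topologies) and the $G$-shift action $(gx)(h)=x(g^{-1}h)$ for $g,h\in G$. A subshift is a closed $G$-invariant subset of $A^G$. A configuration $x$ is periodic if its $G$-orbit is finite. For a finite $\Omega\subset G$ and $x\in A^G$, $x|_\Omega$ denotes the restriction. A subshift $X$ is of finite type if there are a finite $\Omega\subset G$ and $\mathcal P\subset A^\Omega$ with $X=\{x\in A^G : (gx)|_\Omega\in\mathcal P \text{ for all } g\in G\}$. For finite $\Delta\subset G$, $X$ is $\Delta$-irreducible if whenever $\Omega_1,\Omega_2$ are finite subsets of $G$ with $\Omega_1\Delta^{-1}\cap\Omega_2=\varnothing$ and $x_1,x_2\in X$, there is $x\in X$ with $x|_{\Omega_1}=x_1|_{\Omega_1}$ and $x|_{\Omega_2}=x_2|_{\Omega_2}$. $X$ is strongly irreducible if it is $\Delta$-irreducible for some finite $\Delta\subset G$. A group is residually finite if the intersection of its finite-index subgroups is trivial. *)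

(* Defs.v *)
From Stdlib Require List.
From HB Require Import structures.
From mathcomp Require Import all_boot.
From mathcomp Require Import monoid.
Set Implicit Arguments. Unset Strict Implicit. Unset Printing Implicit Defensive.

Local Open Scope group_scope.

Section Shifts.
Variables (G : groupType) (A : finType).

(* Configurations: A^G = G -> A. Finite subsets of G are represented by lists. *)

Definition shift (g : G) (x : G -> A) : G -> A := fun h => x (g^-1 * h).

Definition agree_on (Omega : seq G) (x y : G -> A) : Prop :=
  forall h, h \in Omega -> x h = y h.

Definition cylinder (Omega : seq G) (x : G -> A) : (G -> A) -> Prop :=
  fun y => agree_on Omega x y.

Definition pd_open (U : (G -> A) -> Prop) : Prop :=
  forall x, U x -> exists Omega : seq G, forall y, cylinder Omega x y -> U y.

Definition pd_closed (X : (G -> A) -> Prop) : Prop :=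
  pd_open (fun x => ~ X x).

Definition dense_in (D X : (G -> A) -> Prop) : Prop :=
  (forall x, D x -> X x) /\
  forall U, pd_open U -> (exists x, X x /\ U x) -> exists y, D y /\ U y.

Definition shift_invariant (X : (G -> A) -> Prop) : Prop :=
  forall g x, X x -> X (shift g x).

Definition subshift (X : (G -> A) -> Prop) : Prop :=
  pd_closed X /\ shift_invariant X.

Definition periodic (x : G -> A) : Prop :=
  exists s : seq (G -> A), forall g, List.In (shift g x) s.

Definition restr (Omega : seq G) (x : G -> A) : seq A := map x Omega.

Definition finite_type (X : (G -> A) -> Prop) : Prop :=
  exists (Omega : seq G) (P : seq A -> Prop),
    forall x, X x <-> (forall g, P (restr Omega (shift g x))).

Definition irreducible_wrt (Delta : seq G) (X : (G -> A) -> Prop) : Prop :=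
  forall Omega1 Omega2 : seq G,
    (forall a d, a \in Omega1 -> d \in Delta -> (a * d^-1) \notin Omega2) ->
    forall x1 x2, X x1 -> X x2 ->
      exists x, X x /\ agree_on Omega1 x x1 /\ agree_on Omega2 x x2.

Definition strongly_irreducible (X : (G -> A) -> Prop) : Prop :=
  exists Delta : seq G, irreducible_wrt Delta X.

End Shifts.

Section ResFin.
Variable G : groupType.
Local Open Scope group_scope.

Definition is_subgroup (H : G -> Prop) : Prop :=
  H 1 /\ (forall a b, H a -> H b -> H (a * b)) /\ (forall a, H a -> H a^-1).

Definition finite_index (H : G -> Prop) : Prop :=
  exists s : seq G, forall g, exists2 t, t \in s & H (t^-1 * g).

Definition residually_finite : Prop :=
  forall g : G, (forall H, is_subgroup H -> finite_index H -> H g) -> g = 1.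

End ResFin.

(* Main.v *)
From Stdlib Require Import Classical ClassicalEpsilon FunctionalExtensionality.
Require Import Defs.
From HB Require Import structures.
From mathcomp Require Import all_boot.
From mathcomp Require Import monoid.
Set Implicit Arguments. Unset Strict Implicit. Unset Printing Implicit Defensive.

Section Aux.
Local Open Scope group_scope.
Variables (G : groupType) (A : finType).

Lemma shiftM (a b : G) (x : G -> A) : shift a (shift b x) = shift (a * b) x.
Proof. apply: functional_extensionality => h; by rewrite /shift invgM mulgA. Qed.

Lemma shift1 (x : G -> A) : shift 1 x = x.
Proof. apply: functional_extensionality => h; by rewrite /shift invg1 mul1g. Qed.

Lemma In_mem (T : eqType) (t : T) (s : seq T) : t \in s -> List.In t s.
Proof.
elim: s => [|a s IH] //=; rewrite inE => /orP[/eqP ->|ts]; [by left|by right; apply: IH].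
Qed.

Lemma In_map_mem (T : eqType) U (f : T -> U) t s : t \in s -> List.In (f t) (map f s).
Proof.
elim: s => [|a s IH] //=; rewrite inE => /orP[/eqP ->|ts]; [by left|by right; apply: IH].
Qed.

Lemma pick_list (T : Type) (Q : T -> G -> Prop) (l : list T) :
  exists rs : seq G, forall a, List.In a l -> (exists g, Q a g) -> exists2 r, r \in rs & Q a r.
Proof.
elim: l => [|a l [rs Hrs]]; first by exists [::].
case: (classic (exists g, Q a g)) => [[g Hg]|Hn].
- exists (g :: rs) => b [<-|Hb] Hex; first by exists g; rewrite ?inE ?eqxx.
  by have [r Hr HQ] := Hrs b Hb Hex; exists r; rewrite // inE Hr orbT.
- exists rs => b [<-|Hb] Hex; [by case: Hn|exact: Hrs].
Qed.

Lemma subgroupI (H1 H2 : G -> Prop) : is_subgroup H1 -> is_subgroup H2 ->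
  is_subgroup (fun g => H1 g /\ H2 g).
Proof.
move=> [o1 [M1 V1]] [o2 [M2 V2]]; split; first by [].
split; first by move=> a b [] ? ? [] ? ?; split; [apply: M1|apply: M2].
by move=> a [] ? ?; split; [apply: V1|apply: V2].
Qed.

Lemma fin_indexI (H1 H2 : G -> Prop) : is_subgroup H1 -> is_subgroup H2 ->
  finite_index H1 -> finite_index H2 -> finite_index (fun g => H1 g /\ H2 g).
Proof.
move=> [_ [M1 V1]] [_ [M2 V2]] [s1 Hs1] [s2 Hs2].
have [rs Hrs] := pick_list (fun p r => H1 (p.1^-1 * r) /\ H2 (p.2^-1 * r))
  [seq (t1, t2) | t1 <- s1, t2 <- s2].
exists rs => g.
have [t1 t1s h1] := Hs1 g; have [t2 t2s h2] := Hs2 g.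
have [|| r rin [r1 r2]] := Hrs (t1, t2).
- by apply: In_mem; apply: allpairs_f.
- by exists g.
exists r => //=; split.
- have -> : r^-1 * g = (t1^-1 * r)^-1 * (t1^-1 * g) by rewrite invgM invgK mulgA mulgK.
  exact: M1 (V1 _ r1) h1.
- have -> : r^-1 * g = (t2^-1 * r)^-1 * (t2^-1 * g) by rewrite invgM invgK mulgA mulgK.
  exact: M2 (V2 _ r2) h2.
Qed.

Lemma avoid (RF : residually_finite G) (S : seq G) : exists K, is_subgroup K /\
  finite_index K /\ forall a, a \in S -> a <> 1 -> ~ K a.
Proof.
elim: S => [|a S [K [sK [fK HK]]]].
  exists (fun _ => True); split; first by [].
  by split=> //; exists [:: 1] => g; exists 1; rewrite ?inE.
case: (classic (a = 1)) => [->|na].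
  exists K; do 2!split => //. move=> b; rewrite inE => /orP[/eqP->|bS] //. exact: HK.
have [H [sH [fH nH]]] : exists H, is_subgroup H /\ finite_index H /\ ~ H a.
  apply: NNPP => N; apply: na; apply: RF => H sH fH; apply: NNPP => nHa; apply: N.
  by exists H.
exists (fun g => K g /\ H g); split; [exact: subgroupI|split; [exact: fin_indexI|]].
move=> b; rewrite inE => /orP[/eqP->|bS] nb [Kb Hb]; [exact: nH | exact: HK bS nb Kb].
Qed.

Lemma stab_sub (p : G -> A) : is_subgroup (fun k => shift k p = p).
Proof.
split; first exact: shift1. split.
  by move=> a b Ha Hb; rewrite -shiftM Hb Ha.
by move=> a Ha; rewrite -{1}Ha shiftM mulVg shift1.
Qed.

Lemma stab_fin (p : G -> A) : periodic p -> finite_index (fun k => shift k p = p).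
Proof.
move=> [s Hs].
have [rs Hrs] := pick_list (fun f r => shift r p = f) s.
exists rs => g. have [r rin Hr] := Hrs _ (Hs g) (ex_intro _ g erefl).
by exists r => //; rewrite -shiftM -Hr shiftM mulVg shift1.
Qed.

Fixpoint pickc (N : G -> Prop) (l : seq G) (h : G) : option G :=
  match l with
  | [::] => None
  | c :: l' => if excluded_middle_informative (N (h * c^-1)) then Some c
               else pickc N l' h
  end.

Lemma pickc_some N l h c : pickc N l h = Some c -> c \in l /\ N (h * c^-1).
Proof.
elim: l => [|a l IH] //=.
case: excluded_middle_informative => Na.
  by case=> <-; rewrite inE eqxx.
by move/IH=> [cl Nc]; rewrite inE cl orbT.
Qed.

Lemma pickc_none N l h : pickc N l h = None -> forall c, c \in l -> ~ N (h * c^-1).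
Proof.
elim: l => [|a l IH] //=.
case: excluded_middle_informative => Na // /IH H c; rewrite inE => /orP[/eqP->|] //.
exact: H.
Qed.

End Aux.

Local Open Scope group_scope.

Theorem theorem1p1 (G : groupType) (A : finType) (X : (G -> A) -> Prop) :
  residually_finite G ->
  subshift X -> finite_type X -> strongly_irreducible X ->
  (exists x, X x /\ periodic x) ->
  dense_in (fun x => X x /\ periodic x) X.
Proof.
move=> RF _ [M [P HX]] [Delta HI] [p [Xp perp]].
split; first by move=> x [].
move=> U oU [x [Xx Ux]].
have [E HE] := oU x Ux.
suff [y [[Xy pery] Ey]] : exists y, (X y /\ periodic y) /\ agree_on E x y.
  by exists y; split=> //; apply: HE.
pose C0 := E ++ [seq e * d^-1 | e <- E, d <- Delta].
pose C := C0 ++ [seq c * mw | c <- C0, mw <- [seq m^-1 * w | m <- M, w <- M]].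
have C0C : forall c, c \in C0 -> c \in C by move=> c cC; rewrite mem_cat cC.
have sep : forall a d, a \in E -> d \in Delta -> (a * d^-1) \notin [seq c <- C | c \notin C0].
  move=> a d aE dD; rewrite mem_filter negb_and negbK; apply/orP; left.
  rewrite mem_cat; apply/orP; right; exact: (allpairs_f (fun e d => e * d^-1)).
have [z [Xz [zE zO]]] := HI E [seq c <- C | c \notin C0] sep x p Xx Xp.
have [K [sK [fK HK]]] := avoid RF [seq c' * c^-1 | c' <- C, c <- C].
pose N := fun g => shift g p = p /\ K g.
have sN : is_subgroup N := subgroupI (stab_sub p) sK.
have fN : finite_index N := fin_indexI (stab_sub p) sK (stab_fin perp) fK.
have [N1 [NM NV]] := sN.
have Uq : forall h c c', c \in C -> c' \in C -> N (h * c^-1) -> N (h * c'^-1) -> c = c'.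
  move=> h c c' cC c'C [_ K1] [_ K2]; apply: NNPP => ne.
  apply: (HK (c' * c^-1)); first exact: allpairs_f.
  - by move/eqP; rewrite divg_eq1 => /eqP e; apply: ne.
  - have -> : c' * c^-1 = (h * c'^-1)^-1 * (h * c^-1) by rewrite invgM invgK mulgA mulgVK.
    case: sK => _ [MK VK]; exact: MK (VK _ K2) K1.
have pN : forall k h, N k -> p (k * h) = p h.
  move=> k h [Hk _]; have := f_equal (fun f => f (k * h)) Hk.
  by rewrite /shift mulKg => <-.
pose y h := match pickc N C h with Some c => z c | None => p h end.
have yE : forall h c, c \in C -> N (h * c^-1) -> y h = z c.
  move=> h c cC Nh; rewrite /y; case E1: pickc => [c'|].
    by have [c'C Nc'] := pickc_some E1; rewrite (Uq h c' c).
  by case: (pickc_none E1 cC).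
have yP : forall h, (forall c0, c0 \in C0 -> ~ N (h * c0^-1)) -> y h = p h.
  move=> h H; rewrite /y; case E1: pickc => [c|] //.
  have [cC Nc] := pickc_some E1.
  have cn : c \notin C0 by apply/negP => /H.
  have := pN _ c Nc; rewrite mulgVK => ->.
  by apply: zO; rewrite mem_filter cn.
have yN : forall k h, N k -> y (k * h) = y h.
  move=> k h Nk; case E1: (pickc N C h) => [c|].
    have [cC Nc] := pickc_some E1.
    rewrite (yE h c cC Nc); apply: (yE _ c cC); rewrite -mulgA; exact: NM.
  rewrite /y E1; case E2: pickc => [c|]; last exact: pN.
  have [cC Nc] := pickc_some E2; case: (pickc_none E1 cC).
  by have := NM _ _ (NV _ Nk) Nc; rewrite !mulgA mulVg mul1g.
exists y; split; last first.
  move=> h hE; rewrite (yE h h) ?mulgV //; last by apply: C0C; rewrite mem_cat hE.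
  by rewrite zE.
split.
  apply/HX => g.
  case: (classic (exists m c0, m \in M /\ c0 \in C0 /\ N (g^-1 * m * c0^-1))).
    move=> [m [c0 [mM [c0C Ng]]]].
    have -> : restr M (shift g y) = restr M (shift (c0 * (m^-1)) ^-1 z).
      rewrite /restr; apply/eq_in_map => w wM; rewrite /shift invgK.
      apply: yE.
        by rewrite mem_cat; apply/orP; right; rewrite -mulgA; apply: allpairs_f => //; apply: allpairs_f.
      suff -> : g^-1 * w * (c0 * m^-1 * w)^-1 = g^-1 * m * c0^-1 by [].
      by rewrite !invgM !invgK !mulgA mulgK.
    exact: (proj1 (HX z) Xz _).
  move=> Hn.
  have -> : restr M (shift g y) = restr M (shift g p).
    rewrite /restr; apply/eq_in_map => w wM; rewrite /shift; apply: yP => c0 c0C Nh.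
    by apply: Hn; exists w, c0.
  exact: (proj1 (HX p) Xp g).
have [s Hs] := fN.
exists [seq shift t y | t <- s] => g.
have [t ts Nt] := Hs g.
have -> : shift g y = shift t y.
  rewrite -(mulVKg t g) -shiftM; congr shift.
  apply: functional_extensionality => h; rewrite /shift; exact: yN _ _ (NV _ Nt).
exact: (In_map_mem (fun t0 => shift t0 y) ts).
Qed.
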